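(* Let all notions be as in the context. If $(\Gamma,\mathsf{eval}\ e,[\,])\Longrightarrow^{*}(\Delta,\mathsf{eval}\ w,[\,])$, where $w$ is a weak head normal form, then $\Gamma;\emptyset;e\Downarrow\Delta;w$.
   Context: The language $\lambda_{\mathrm{PMC}}$ (in normalized form). Expressions: $e ::= x \mid e\,y \mid \lambda m \mid c(y_1,\ldots,y_n)$, where $x,y,y_i$ are variables, $c$ ranges over constructors, and application arguments and constructor arguments are variables. Matchings: $m ::= \mathsf{ret}(e) \mid \mathsf{fail} \mid p \Rightarrow m \mid y \triangleright m \mid m_1 \mid m_2 \mid (m\ \mathsf{where}\ \{x_1=e_1;\ldots;x_n=e_n\})$ (return expression, failure, pattern match, argument supply, alternative, local possibly recursive bindings). Patterns: $p ::= x \mid c(p_1,\ldots,p_n)$ (patterns may be nested). The matching $y_1 \triangleright p_1 \Rightarrow \cdots \Rightarrow y_n \triangleright p_n \Rightarrow m$ associates to the right: $y_1 \triangleright (p_1 \Rightarrow (y_2 \triangleright (\cdots (p_n \Rightarrow m)\cdots)))$. $m[y/x]$ denotes capture-avoiding substitution of $y$ for free occurrences of $x$. Arity: $\mathrm{ar}(\mathsf{ret}(e))=0$, $\mathrm{ar}(\mathsf{fail})=0$, $\mathrm{ar}(p\Rightarrow m)=1+\mathrm{ar}(m)$, $\mathrm{ar}(y\triangleright m)=\max(0,\mathrm{ar}(m)-1)$, $\mathrm{ar}(m_1\mid m_2)=\mathrm{ar}(m_1)$ if $\mathrm{ar}(m_1)=\mathrm{ar}(m_2)$ (undefined otherwise),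 $\mathrm{ar}(m\ \mathsf{where}\ b)=\mathrm{ar}(m)$. Weak head normal forms: $w ::= \lambda m$ with $\mathrm{ar}(m)>0$, or $c(y_1,\ldots,y_n)$. Matching results: $r ::= \mathsf{ret}(e) \mid \mathsf{fail}$. A heap $\Gamma,\Delta,\Theta$ is a finite map from variables to expressions; $\Gamma[y\mapsto e]$ maps $y$ to $e$ and otherwise agrees with $\Gamma$. An argument stack $A$ is a list of variables; for such a list define $[\,]\triangleright e = e$ and $(y:ys)\triangleright e = ys \triangleright (e\,y)$. $L$ is a set of variables. Big-step semantics: two mutually inductive judgments $\Gamma;L;e \Downarrow \Delta;w$ and $\Gamma;L;A;m \Downarrow_M \Delta;r$ defined by the rules: (Whnf) $\Gamma;L;w \Downarrow \Gamma;w$. (Sat) if $\mathrm{ar}(m)=0$, $\Gamma;L;[\,];m \Downarrow_M \Delta;\mathsf{ret}(e)$ and $\Delta;L;e\Downarrow\Theta;w$, then $\Gamma;L;\lambda m \Downarrow \Theta;w$. (Var) if $\Gamma;L\cup\{y\};e \Downarrow \Delta;w$ then $\Gamma[y\mapsto e];L;y \Downarrow \Delta[y\mapsto w];w$. (App) if $\Gamma;L;e\Downarrow\Delta;\lambda m$ and $\Delta;L;\lambda(y\triangleright m)\Downarrow\Theta;w$ then $\Gamma;L;(e\,y)\Downarrow\Theta;w$. (Return) $\Gamma;L;A;\mathsf{ret}(e)\Downarrow_M\Gamma;\mathsf{ret}(A\triangleright e)$. (Fail) $\Gamma;L;A;\mathsf{fail}\Downarrow_M\Gamma;\mathsf{fail}$.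 (Arg) if $\Gamma;L;(y:A);m\Downarrow_M\Delta;r$ then $\Gamma;L;A;y\triangleright m\Downarrow_M\Delta;r$. (Bind) if $\Gamma;L;A;m[y/x]\Downarrow_M\Delta;r$ then $\Gamma;L;(y:A);x\Rightarrow m\Downarrow_M\Delta;r$. (Cons1) if $\Gamma;L;y\Downarrow\Delta;c(y_1,\ldots,y_n)$ and $\Delta;L;A;y_1\triangleright p_1\Rightarrow\cdots\Rightarrow y_n\triangleright p_n\Rightarrow m\Downarrow_M\Theta;r$ then $\Gamma;L;(y:A);c(p_1,\ldots,p_n)\Rightarrow m\Downarrow_M\Theta;r$. (Cons2) if $\Gamma;L;y\Downarrow\Delta;c'(y_1,\ldots,y_k)$ with $c\neq c'$ then $\Gamma;L;(y:A);c(p_1,\ldots,p_n)\Rightarrow m\Downarrow_M\Delta;\mathsf{fail}$. (Alt1) if $\Gamma;L;A;m_1\Downarrow_M\Delta;\mathsf{ret}(e)$ then $\Gamma;L;A;(m_1\mid m_2)\Downarrow_M\Delta;\mathsf{ret}(e)$. (Alt2) if $\Gamma;L;A;m_1\Downarrow_M\Delta;\mathsf{fail}$ and $\Delta;L;A;m_2\Downarrow_M\Theta;r$ then $\Gamma;L;A;(m_1\mid m_2)\Downarrow_M\Theta;r$. (Where) if $\Gamma[y_i\mapsto\hat e_i];L;A;\hat m\Downarrow_M\Delta;r$ then $\Gamma;L;A;(m\ \mathsf{where}\ \{x_i=e_i\})\Downarrow_M\Delta;r$, where the $y_i$ are fresh (occur neither free nor bound in $\Gamma$, $L$, $A$, or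 $m$), $\hat e_i=e_i[y_1/x_1,\ldots,y_n/x_n]$ and $\hat m=m[y_1/x_1,\ldots,y_n/x_n]$. Abstract machine. Controls: $C ::= \mathsf{eval}\ e \mid \mathsf{match}\ A\ m$. Continuations: $k ::= y \mid\ !y \mid \$ \mid ?(A,m) \mid @(A, c(\vec p)\Rightarrow m)$. A return stack $S$ is a list of continuations. Configurations are triples $(\Gamma, C, S)$. Transitions $\Longrightarrow$: (App1) $(\Gamma,\mathsf{eval}\ (e\,y),S)\Longrightarrow(\Gamma,\mathsf{eval}\ e,y:S)$. (App2) $(\Gamma,\mathsf{eval}\ \lambda m,y:S)\Longrightarrow(\Gamma,\mathsf{eval}\ \lambda(y\triangleright m),S)$ if $\mathrm{ar}(m)>0$. (Sat) $(\Gamma,\mathsf{eval}\ \lambda m,S)\Longrightarrow(\Gamma,\mathsf{match}\ [\,]\ m,\$:S)$ if $\mathrm{ar}(m)=0$. (Var) $(\Gamma[y\mapsto e],\mathsf{eval}\ y,S)\Longrightarrow(\Gamma,\mathsf{eval}\ e,!y:S)$. (Update) $(\Gamma,\mathsf{eval}\ w,!y:S)\Longrightarrow(\Gamma[y\mapsto w],\mathsf{eval}\ w,S)$. (Return1A) $(\Gamma,\mathsf{match}\ A\ \mathsf{ret}(e),S)\Longrightarrow(\Gamma,\mathsf{match}\ [\,]\ \mathsf{ret}(A\triangleright e),S)$ if $A\neq[\,]$. (Return1B) $(\Gamma,\mathsf{match}\ [\,]\ \mathsf{ret}(e),\$:S)\Longrightarrow(\Gamma,\mathsf{eval}\ e,S)$.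 (Return2) $(\Gamma,\mathsf{match}\ [\,]\ \mathsf{ret}(e),?(A',m):S)\Longrightarrow(\Gamma,\mathsf{match}\ [\,]\ \mathsf{ret}(e),S)$. (Bind) $(\Gamma,\mathsf{match}\ (y:A)\ (x\Rightarrow m),S)\Longrightarrow(\Gamma,\mathsf{match}\ A\ m[y/x],S)$. (Cons1) $(\Gamma,\mathsf{match}\ (y:A)\ (c(\vec p)\Rightarrow m),S)\Longrightarrow(\Gamma,\mathsf{eval}\ y,@(A,c(\vec p)\Rightarrow m):S)$. (Cons2) $(\Gamma,\mathsf{eval}\ c(y_1,\ldots,y_n),@(A,c(p_1,\ldots,p_n)\Rightarrow m):S)\Longrightarrow(\Gamma,\mathsf{match}\ A\ (y_1\triangleright p_1\Rightarrow\cdots\Rightarrow y_n\triangleright p_n\Rightarrow m),S)$. (Fail) $(\Gamma,\mathsf{eval}\ c'(y_1,\ldots,y_k),@(A,c(p_1,\ldots,p_n)\Rightarrow m):S)\Longrightarrow(\Gamma,\mathsf{match}\ [\,]\ \mathsf{fail},S)$ if $c\neq c'$. (Arg) $(\Gamma,\mathsf{match}\ A\ (y\triangleright m),S)\Longrightarrow(\Gamma,\mathsf{match}\ (y:A)\ m,S)$. (Alt1) $(\Gamma,\mathsf{match}\ A\ (m_1\mid m_2),S)\Longrightarrow(\Gamma,\mathsf{match}\ A\ m_1,?(A,m_2):S)$. (Alt2) $(\Gamma,\mathsf{match}\ A'\ \mathsf{fail},?(A,m):S)\Longrightarrow(\Gamma,\mathsf{match}\ A\ m,S)$. (Where) $(\Gamma,\mathsf{match}\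 A\ (m\ \mathsf{where}\ \{x_i=e_i\}),S)\Longrightarrow(\Gamma[y_i\mapsto\hat e_i],\mathsf{match}\ A\ \hat m,S)$ with $y_i$ fresh, $\hat e_i=e_i[y_1/x_1,\ldots,y_n/x_n]$, $\hat m=m[y_1/x_1,\ldots,y_n/x_n]$. $\Longrightarrow^{*}$ is the reflexive–transitive closure of $\Longrightarrow$. *)

(* Defs.v *)
From Stdlib Require Import List Arith Bool.
Import ListNotations.

Definition atom := nat.
Definition con := nat.

(** A variable occurrence: either a bound variable (de Bruijn index) or a
    free name.  Binders are the pattern variables of [p => m] and the
    variables [x_1..x_n] of [m where {x_i = e_i}]. *)
Inductive vr : Type :=
| BV (i : nat)
| FV (x : atom).

Inductive pat : Type :=
| PVar
| PCon (c : con) (ps : list pat).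

(** Expressions and matchings.
    [EVar x] = x, [EApp e y] = e y, [ELam m] = \lambda m, [ECon c ys] = c(ys);
    [MRet e] = ret(e), [MFail] = fail, [MPat p m] = p => m, [MArg y m] = y |> m,
    [MAlt m1 m2] = m1 | m2, [MWhere m es] = m where {x_1 = e_1; ...; x_n = e_n}. *)
Inductive expr : Type :=
| EVar (v : vr)
| EApp (e : expr) (v : vr)
| ELam (m : mtch)
| ECon (c : con) (vs : list vr)
with mtch : Type :=
| MRet (e : expr)
| MFail
| MPat (p : pat) (m : mtch)
| MArg (v : vr) (m : mtch)
| MAlt (m1 m2 : mtch)
| MWhere (m : mtch) (es : list expr).

(** Convention: in [MPat p m], the
    pattern variables of [p] (listed left to right v_1..v_K) are referred to in
    [m] by the indices K-1, ..., 0 (the last one is index 0); with this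
    convention [c(p_1..p_n) => m] and [p_1 => ... => p_n => m] bind the same
    indices in [m].  In [MWhere m es], x_j (j = 0..n-1) is index j in the
    [es] and in [m]. *)
Fixpoint pat_nv (p : pat) : nat :=
  match p with
  | PVar => 1
  | PCon _ ps => list_sum (map pat_nv ps)
  end.

Definition open_vr (k : nat) (us : list vr) (v : vr) : vr :=
  match v with
  | BV i => if (k <=? i) && (i <? k + length us) then nth (i - k) us v else v
  | FV _ => v
  end.

Fixpoint open_e (k : nat) (us : list vr) (e : expr) {struct e} : expr :=
  match e with
  | EVar v => EVar (open_vr k us v)
  | EApp e' v => EApp (open_e k us e') (open_vr k us v)
  | ELam m => ELam (open_m k us m)
  | ECon c vs => ECon c (map (open_vr k us) vs)
  end
with open_m (k : nat) (us : list vr) (m : mtch) {struct m} : mtch :=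
  match m with
  | MRet e => MRet (open_e k us e)
  | MFail => MFail
  | MPat p m' => MPat p (open_m (k + pat_nv p) us m')
  | MArg v m' => MArg (open_vr k us v) (open_m k us m')
  | MAlt m1 m2 => MAlt (open_m k us m1) (open_m k us m2)
  | MWhere m' es =>
      MWhere (open_m (k + length es) us m') (map (open_e (k + length es) us) es)
  end.

Definition fv_vr (v : vr) : list atom :=
  match v with BV _ => [] | FV x => [x] end.

Fixpoint fv_e (e : expr) : list atom :=
  match e with
  | EVar v => fv_vr v
  | EApp e' v => fv_e e' ++ fv_vr v
  | ELam m => fv_m m
  | ECon _ vs => flat_map fv_vr vs
  end
with fv_m (m : mtch) : list atom :=
  match m with
  | MRet e => fv_e e
  | MFail => []
  | MPat _ m' => fv_m m'
  | MArg v m' => fv_vr v ++ fv_m m'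
  | MAlt m1 m2 => fv_m m1 ++ fv_m m2
  | MWhere m' es => fv_m m' ++ flat_map fv_e es
  end.

Definition fv_args (A : list vr) : list atom := flat_map fv_vr A.

Fixpoint ar (m : mtch) : option nat :=
  match m with
  | MRet _ => Some 0
  | MFail => Some 0
  | MPat _ m' => option_map S (ar m')
  | MArg _ m' => option_map pred (ar m')   (* max(0, ar m' - 1) *)
  | MAlt m1 m2 =>
      match ar m1, ar m2 with
      | Some a, Some b => if a =? b then Some a else None
      | _, _ => None
      end
  | MWhere m' _ => ar m'
  end.

Definition whnf (e : expr) : Prop :=
  match e with
  | ELam m => exists k, ar m = Some (S k)
  | ECon _ _ => True
  | _ => False
  end.

Inductive mres : Type :=
| RRet (e : expr)
| RFail.

Definition app_args (A : list vr) (e : expr) : expr := fold_left EApp A e.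

Fixpoint chain (ys : list vr) (ps : list pat) (m : mtch) : mtch :=
  match ys, ps with
  | y :: ys', p :: ps' => MArg y (MPat p (chain ys' ps' m))
  | _, _ => m
  end.

(** Heaps: maps from names to expressions (finite domain assumed where needed). *)
Definition heap := atom -> option expr.

Definition heap_finite (H : heap) : Prop :=
  exists l : list atom, forall x, H x <> None -> In x l.

Definition upd (H : heap) (y : atom) (e : expr) : heap :=
  fun z => if z =? y then Some e else H z.

(** Heap without the binding for y (so that Gamma[y |-> e] decomposes as
    [rem Gamma y] extended with y |-> e). *)
Definition rem (H : heap) (y : atom) : heap :=
  fun z => if z =? y then None else H z.

Fixpoint upds (H : heap) (ys : list atom) (es : list expr) : heap :=
  match ys, es with
  | y :: ys', e :: es' => upd (upds H ys' es') y e
  | _, _ => H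
  end.

Definition heap_occ (H : heap) (y : atom) : Prop :=
  H y <> None \/ exists z e, H z = Some e /\ In y (fv_e e).

Definition fresh_big (G : heap) (L : list atom) (A : list vr) (m : mtch) (y : atom) : Prop :=
  ~ heap_occ G y /\ ~ In y L /\ ~ In y (fv_args A) /\ ~ In y (fv_m m).

Inductive beval : heap -> list atom -> expr -> heap -> expr -> Prop :=
| B_Whnf G L w :
    whnf w -> beval G L w G w
| B_Sat G L m D e T w :
    ar m = Some 0 ->
    bmatch G L [] m D (RRet e) ->
    beval D L e T w ->
    beval G L (ELam m) T w
| B_Var G L y e D w :
    G y = Some e ->
    beval (rem G y) (y :: L) e D w ->
    beval G L (EVar (FV y)) (upd D y w) w
| B_App G L e y D m T w :
    beval G L e D (ELam m) ->
    beval D L (ELam (MArg y m)) T w ->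
    beval G L (EApp e y) T w
with bmatch : heap -> list atom -> list vr -> mtch -> heap -> mres -> Prop :=
| BM_Return G L A e :
    bmatch G L A (MRet e) G (RRet (app_args A e))
| BM_Fail G L A :
    bmatch G L A MFail G RFail
| BM_Arg G L A y m D r :
    bmatch G L (y :: A) m D r ->
    bmatch G L A (MArg y m) D r
| BM_Bind G L A y m D r :
    bmatch G L A (open_m 0 [y] m) D r ->
    bmatch G L (y :: A) (MPat PVar m) D r
| BM_Cons1 G L A y c ps m D ys T r :
    beval G L (EVar y) D (ECon c ys) ->
    length ys = length ps ->
    bmatch D L A (chain ys ps m) T r ->
    bmatch G L (y :: A) (MPat (PCon c ps) m) T r
| BM_Cons2 G L A y c ps m D c' ys :
    beval G L (EVar y) D (ECon c' ys) ->
    c <> c' ->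
    bmatch G L (y :: A) (MPat (PCon c ps) m) D RFail
| BM_Alt1 G L A m1 m2 D e :
    bmatch G L A m1 D (RRet e) ->
    bmatch G L A (MAlt m1 m2) D (RRet e)
| BM_Alt2 G L A m1 m2 D T r :
    bmatch G L A m1 D RFail ->
    bmatch D L A m2 T r ->
    bmatch G L A (MAlt m1 m2) T r
| BM_Where G L A m es ys D r :
    length ys = length es ->
    NoDup ys ->
    (forall y, In y ys -> fresh_big G L A (MWhere m es) y) ->
    bmatch (upds G ys (map (open_e 0 (map FV ys)) es)) L A
           (open_m 0 (map FV ys) m) D r ->
    bmatch G L A (MWhere m es) D r.

Inductive ctrl : Type :=
| CEval (e : expr)
| CMatch (A : list vr) (m : mtch).

Inductive cont : Type :=
| KArg (y : vr)
| KUpd (y : atom)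
| KRet
| KAlt (A : list vr) (m : mtch)
| KCon (A : list vr) (c : con) (ps : list pat) (m : mtch).

Definition config : Type := (heap * ctrl * list cont)%type.

Definition fv_ctrl (C : ctrl) : list atom :=
  match C with
  | CEval e => fv_e e
  | CMatch A m => fv_args A ++ fv_m m
  end.

Definition fv_cont (k : cont) : list atom :=
  match k with
  | KArg y => fv_vr y
  | KUpd y => [y]
  | KRet => []
  | KAlt A m => fv_args A ++ fv_m m
  | KCon A _ _ m => fv_args A ++ fv_m m
  end.

Definition fresh_cfg (G : heap) (C : ctrl) (st : list cont) (y : atom) : Prop :=
  ~ heap_occ G y /\ ~ In y (fv_ctrl C) /\ ~ In y (flat_map fv_cont st).

Inductive step : config -> config -> Prop :=
| S_App1 G e y st :
    step (G, CEval (EApp e y), st) (G, CEval e, KArg y :: st)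
| S_App2 G m y st k :
    ar m = Some (S k) ->
    step (G, CEval (ELam m), KArg y :: st) (G, CEval (ELam (MArg y m)), st)
| S_Sat G m st :
    ar m = Some 0 ->
    step (G, CEval (ELam m), st) (G, CMatch [] m, KRet :: st)
| S_Var G y e st :
    G y = Some e ->
    step (G, CEval (EVar (FV y)), st) (rem G y, CEval e, KUpd y :: st)
| S_Update G w y st :
    whnf w ->
    step (G, CEval w, KUpd y :: st) (upd G y w, CEval w, st)
| S_Return1A G A e st :
    A <> [] ->
    step (G, CMatch A (MRet e), st) (G, CMatch [] (MRet (app_args A e)), st)
| S_Return1B G e st :
    step (G, CMatch [] (MRet e), KRet :: st) (G, CEval e, st)
| S_Return2 G e A' m st :
    step (G, CMatch [] (MRet e), KAlt A' m :: st) (G, CMatch [] (MRet e), st)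
| S_Bind G y A m st :
    step (G, CMatch (y :: A) (MPat PVar m), st) (G, CMatch A (open_m 0 [y] m), st)
| S_Cons1 G y A c ps m st :
    step (G, CMatch (y :: A) (MPat (PCon c ps) m), st)
         (G, CEval (EVar y), KCon A c ps m :: st)
| S_Cons2 G c ys A ps m st :
    length ys = length ps ->
    step (G, CEval (ECon c ys), KCon A c ps m :: st) (G, CMatch A (chain ys ps m), st)
| S_Fail G c' ys A c ps m st :
    c <> c' ->
    step (G, CEval (ECon c' ys), KCon A c ps m :: st) (G, CMatch [] MFail, st)
| S_Arg G A y m st :
    step (G, CMatch A (MArg y m), st) (G, CMatch (y :: A) m, st)
| S_Alt1 G A m1 m2 st :
    step (G, CMatch A (MAlt m1 m2), st) (G, CMatch A m1, KAlt A m2 :: st)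
| S_Alt2 G A' A m st :
    step (G, CMatch A' MFail, KAlt A m :: st) (G, CMatch A m, st)
| S_Where G A m es ys st :
    length ys = length es ->
    NoDup ys ->
    (forall y, In y ys -> fresh_cfg G (CMatch A (MWhere m es)) st y) ->
    step (G, CMatch A (MWhere m es), st)
         (upds G ys (map (open_e 0 (map FV ys)) es), CMatch A (open_m 0 (map FV ys) m), st).

Inductive steps : config -> config -> Prop :=
| steps_refl c : steps c c
| steps_step c1 c2 c3 : step c1 c2 -> steps c2 c3 -> steps c1 c3.

(* Main.v *)
Require Import Defs.
From Stdlib Require Import List.
Import ListNotations.

Fixpoint Ls (St : list cont) : list atom :=
  match St with
  | [] => []
  | KUpd y :: St' => y :: Ls St'
  | _ :: St' => Ls St'
  end.

Fixpoint Kont (Df : heap) (wf : expr) (St : list cont) (D : heap) (w : expr) {struct St} : Prop :=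
  match St with
  | [] => D = Df /\ w = wf
  | KArg y :: St' => exists m, w = ELam m /\ exists D2 w2,
        beval D (Ls St') (ELam (MArg y m)) D2 w2 /\ Kont Df wf St' D2 w2
  | KUpd y :: St' => Kont Df wf St' (upd D y w) w
  | KRet :: _ => False
  | KAlt _ _ :: _ => False
  | KCon A c ps m :: St' => exists c' ys, w = ECon c' ys /\
        ((c = c' /\ length ys = length ps /\ exists T r,
            bmatch D (Ls St') A (chain ys ps m) T r /\ Kres Df wf St' T r)
         \/ (c <> c' /\ Kres Df wf St' D RFail))
  end
with Kres (Df : heap) (wf : expr) (St : list cont) (D : heap) (r : mres) {struct St} : Prop :=
  match St with
  | KRet :: St' => exists e, r = RRet e /\ exists D2 w2,
        beval D (Ls St') e D2 w2 /\ Kont Df wf St' D2 w2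
  | KAlt A m :: St' =>
      match r with
      | RRet _ => Kres Df wf St' D r
      | RFail => exists T r', bmatch D (Ls St') A m T r' /\ Kres Df wf St' T r'
      end
  | _ => False
  end.

Definition Good (Df : heap) (wf : expr) (c : config) : Prop :=
  match c with
  | (G, CEval e, St) => exists D w, beval G (Ls St) e D w /\ Kont Df wf St D w
  | (G, CMatch A m, St) => exists T r, bmatch G (Ls St) A m T r /\ Kres Df wf St T r
  end.

Lemma whnf_inv G L w D w' : whnf w -> beval G L w D w' -> D = G /\ w' = w.
Proof.
  intros Hw H; inversion H; subst; auto; simpl in Hw; try contradiction.
  destruct Hw as [k Hk]; congruence.
Qed.

Lemma ret_inv G L A e T r : bmatch G L A (MRet e) T r -> T = G /\ r = RRet (app_args A e).
Proof. intros H; inversion H; subst; auto. Qed.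

Lemma fail_inv G L A T r : bmatch G L A MFail T r -> T = G /\ r = RFail.
Proof. intros H; inversion H; subst; auto. Qed.

Lemma Ls_sub St y : In y (Ls St) -> In y (flat_map fv_cont St).
Proof.
  induction St as [|k St IH]; simpl; auto.
  destruct k; simpl; intros Hi; try (apply in_or_app; right; auto; fail).
  all: try (destruct Hi; [left; auto | right; auto]).
  all: auto.
Qed.

Lemma step_back Df wf c1 c2 : step c1 c2 -> Good Df wf c2 -> Good Df wf c1.
Proof.
  intros Hs; destruct Hs; simpl; intros HG.
  - destruct HG as [D [w [Hb Hk]]]. simpl in Hk.
    destruct Hk as [m [-> [D2 [w2 [Hb2 Hk2]]]]].
    exists D2, w2; split; auto. econstructor; eauto.
  - exists G, (ELam m); split.
    + constructor; simpl; eauto.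
    + simpl. exists m; split; auto.
  - destruct HG as [T [r [Hb Hk]]]. simpl in Hk.
    destruct Hk as [e [-> [D2 [w2 [Hb2 Hk2]]]]].
    exists D2, w2; split; auto. econstructor; eauto.
  - destruct HG as [D [w [Hb Hk]]]. simpl in Hk.
    exists (upd D y w), w; split; auto. econstructor; eauto.
  - destruct HG as [D [w' [Hb Hk]]].
    destruct (whnf_inv _ _ _ _ _ H Hb) as [-> ->].
    exists G, w; split; [constructor; auto | simpl; auto].
  - destruct HG as [T [r [Hb Hk]]].
    destruct (ret_inv _ _ _ _ _ _ Hb) as [-> ->].
    exists G, (RRet (app_args A e)); split; [constructor | auto].
  - exists G, (RRet e); split; [constructor|]. simpl.
    exists e; split; auto.
  - destruct HG as [T [r [Hb Hk]]].
    destruct (ret_inv _ _ _ _ _ _ Hb) as [-> ->].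
    exists G, (RRet e); split; [constructor | simpl; auto].
  - destruct HG as [T [r [Hb Hk]]].
    exists T, r; split; auto. constructor; auto.
  - destruct HG as [D [w [Hb Hk]]]. simpl in Hk.
    destruct Hk as [c' [ys [-> [[<- [Hl [T [r [Hb2 Hk2]]]]] | [Hne Hk2]]]]].
    + exists T, r; split; auto. econstructor; eauto.
    + exists D, RFail; split; auto. eapply BM_Cons2; eauto.
  - exists G, (ECon c ys); split; [constructor; simpl; auto|].
    simpl. exists c, ys; split; auto.
  - destruct HG as [T [r [Hb Hk]]].
    destruct (fail_inv _ _ _ _ _ Hb) as [-> ->].
    exists G, (ECon c' ys); split; [constructor; simpl; auto|].
    simpl. exists c', ys; split; auto.
  - destruct HG as [T [r [Hb Hk]]].
    exists T, r; split; auto. constructor; auto.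
  - destruct HG as [T [r [Hb Hk]]]. simpl in Hk.
    destruct r as [e|].
    + exists T, (RRet e); split; auto. constructor; auto.
    + destruct Hk as [T2 [r2 [Hb2 Hk2]]].
      exists T2, r2; split; auto. econstructor; eauto.
  - exists G, RFail; split; [constructor|]. simpl. auto.
  - destruct HG as [T [r [Hb Hk]]].
    exists T, r; split; auto. econstructor; eauto.
    intros y Hy. destruct (H1 y Hy) as [F1 [F2 F3]].
    simpl in F2. unfold fresh_big.
    repeat split; auto.
    + intro Hi; apply F3; apply Ls_sub; auto.
    + intro Hi; apply F2; apply in_or_app; left; auto.
    + intro Hi; apply F2; apply in_or_app; right; auto.
Qed.

Lemma steps_back Df wf c1 c2 : steps c1 c2 -> Good Df wf c2 -> Good Df wf c1.
Proof.
  induction 1; auto. intros; eapply step_back; eauto.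
Qed.

Theorem corollary4p6 (G D : heap) (e w : expr) :
  heap_finite G ->
  whnf w ->
  steps (G, CEval e, []) (D, CEval w, []) ->
  beval G [] e D w.
Proof.
  intros _ Hw Hs.
  assert (HG : Good D w (D, CEval w, [])).
  { simpl. exists D, w; split; auto. constructor; auto. }
  pose proof (steps_back _ _ _ _ Hs HG) as H. simpl in H.
  destruct H as [D' [w' [Hb [-> ->]]]]. exact Hb.
Qed.
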